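(* Let $B=(b_{pq})\in\mathcal A_n$ and $R_{ij}^{kl}\in E(B)$ (with $i<j$, $k<l$), and let $A=(a_{pq})$ be any real $n\times n$ matrix. Then the following are equivalent: (1) $A\in\mathcal A_n$ and $A\xrightarrow{ij,kl}B$ in the ASM graph; (2) $a_{ik}-b_{ik}=1$, $a_{il}-b_{il}=-1$, $a_{jk}-b_{jk}=-1$, $a_{jl}-b_{jl}=1$, and $a_{pq}=b_{pq}$ for every $(p,q)\notin\{(i,k),(i,l),(j,k),(j,l)\}$.
   Context: An $n\times n$ matrix $A=(a_{ij})$ is an alternating sign matrix (ASM) if all $a_{ij}\in\{-1,0,1\}$, all partial row sums $\sum_{k\le j}a_{ik}$ and partial column sums $\sum_{k\le i}a_{kj}$ lie in $\{0,1\}$, and every full row sum and column sum equals $1$; $\mathcal A_n$ is the set of $n\times n$ ASMs. The corner sum matrix is $\widetilde A(i,j)=\sum_{p\le i,q\le j}a_{pq}$, with $\widetilde A(i,j)=0$ if $i=0$ or $j=0$. For $i<j$, $k<l$ in $[n]$, $R_{ij}^{kl}=\{(p,q): i\le p<j,\ k\le q<l\}$ and $\widetilde R_{ij}^{kl}$ is its $0/1$ indicator matrix. $E(A)$ (essential rectangles): those $R_{ij}^{kl}$ with, for all $(p,q)\in R_{ij}^{kl}$, $\widetilde A(p,k)=\widetilde A(p,k-1)$, $\widetilde A(p,l)=\widetilde A(p,l-1)+1$, $\widetilde A(i,q)=\widetilde A(i-1,q)$, $\widetilde A(j,q)=\widetilde A(j-1,q)+1$. $E^*(A)$ (dual essential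 rectangles): those with $\widetilde A(p,k)=\widetilde A(p,k-1)+1$, $\widetilde A(p,l)=\widetilde A(p,l-1)$, $\widetilde A(i,q)=\widetilde A(i-1,q)+1$, $\widetilde A(j,q)=\widetilde A(j-1,q)$. The operator $r_{ij}^{kl}$ sends $A$ to the ASM with corner sum matrix $\widetilde A+\widetilde R_{ij}^{kl}$ if $R_{ij}^{kl}\in E(A)$, $\widetilde A-\widetilde R_{ij}^{kl}$ if $R_{ij}^{kl}\in E^*(A)$, $\widetilde A$ otherwise. The bigrassmannian statistic is $\beta(A)=\sum_{i,j=1}^n\min(i,j)-\sum_{i,j=1}^n\widetilde A(i,j)$. ASM graph edge: $A\xrightarrow{ij,kl}B$ if $B=r_{ij}^{kl}(A)$ and $\beta(A)<\beta(B)$. *)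

(* Defs.v *)
(* Indices i,j,k,l,p,q of the paper are 1-based naturals;
   matrix entry a_{pq} (1-based) is A (p-1) (q-1) with A : 'M[R]_n (0-based ordinals). *)
From HB Require Import structures.
From mathcomp Require Import all_boot all_order all_algebra.
Set Implicit Arguments. Unset Strict Implicit. Unset Printing Implicit Defensive.
Import Order.TTheory GRing.Theory Num.Theory.
Local Open Scope ring_scope.

Section ASM.
Variable R : realFieldType.

Definition is_ASM (n : nat) (A : 'M[R]_n) : Prop :=
  [/\ (forall p q : 'I_n, A p q \in [:: -1; 0; 1]),
      (forall p q : 'I_n, \sum_(q' < n | (q' <= q)%N) A p q' \in [:: 0; 1]),
      (forall p q : 'I_n, \sum_(p' < n | (p' <= p)%N) A p' q \in [:: 0; 1]),
      (forall p : 'I_n, \sum_(q < n) A p q = 1)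
    & (forall q : 'I_n, \sum_(p < n) A p q = 1)].

(* corner sum  \tilde A(i,j) = sum_{p<=i, q<=j} a_{pq}  (1-based i,j in 0..n;
   equals 0 when i = 0 or j = 0) *)
Definition csum (n : nat) (A : 'M[R]_n) (i j : nat) : R :=
  \sum_(p < n | (p < i)%N) \sum_(q < n | (q < j)%N) A p q.

Definition in_rect (i j k l p q : nat) : bool :=
  (i <= p < j)%N && (k <= q < l)%N.

Definition essential (n : nat) (A : 'M[R]_n) (i j k l : nat) : Prop :=
  forall p q : nat, in_rect i j k l p q ->
    [/\ csum A p k = csum A p k.-1,
        csum A p l = csum A p l.-1 + 1,
        csum A i q = csum A i.-1 q
      & csum A j q = csum A j.-1 q + 1].

Definition dual_essential (n : nat) (A : 'M[R]_n) (i j k l : nat) : Prop :=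
  forall p q : nat, in_rect i j k l p q ->
    [/\ csum A p k = csum A p k.-1 + 1,
        csum A p l = csum A p l.-1,
        csum A i q = csum A i.-1 q + 1
      & csum A j q = csum A j.-1 q].

(* B = r_{ij}^{kl}(A), expressed through corner sum matrices (which determine
   the matrix) *)
Definition rop_rel (n : nat) (A B : 'M[R]_n) (i j k l : nat) : Prop :=
  [/\ essential A i j k l ->
        (forall p q : nat, (p <= n)%N -> (q <= n)%N ->
           csum B p q = csum A p q + (in_rect i j k l p q)%:R),
      dual_essential A i j k l ->
        (forall p q : nat, (p <= n)%N -> (q <= n)%N ->
           csum B p q = csum A p q - (in_rect i j k l p q)%:R)
    & (~ essential A i j k l /\ ~ dual_essential A i j k l) ->
        (forall p q : nat, (p <= n)%N -> (q <= n)%N ->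
           csum B p q = csum A p q)].

Definition beta (n : nat) (A : 'M[R]_n) : R :=
  \sum_(i < n) \sum_(j < n) (minn i.+1 j.+1)%:R
  - \sum_(i < n) \sum_(j < n) csum A i.+1 j.+1.

Definition asm_edge (n : nat) (A B : 'M[R]_n) (i j k l : nat) : Prop :=
  rop_rel A B i j k l /\ beta A < beta B.

End ASM.

(* Main.v *)
Require Import Defs.
From HB Require Import structures.
From mathcomp Require Import all_boot all_order all_algebra.
From mathcomp Require Import zify ring lra.
From Stdlib Require Import Classical.
Import Order.TTheory GRing.Theory Num.Theory.
Local Open Scope ring_scope.


Lemma sum_ltS (R : realFieldType) (n : nat) (f : 'I_n -> R) (q : 'I_n) :
  \sum_(x < n | (x < q.+1)%N) f x = f q + \sum_(x < n | (x < q)%N) f x.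
Proof.
rewrite (bigD1 q) //=; congr (_ + _); apply: eq_bigl => x.
by rewrite ltnS ltn_neqAle andbC.
Qed.

Lemma csumS_row (R : realFieldType) (n : nat) (M : 'M[R]_n) (p : 'I_n) Q :
  csum M p.+1 Q = csum M p Q + \sum_(q < n | (q < Q)%N) M p q.
Proof. by rewrite /csum sum_ltS addrC. Qed.

Lemma csumS_col (R : realFieldType) (n : nat) (M : 'M[R]_n) P (q : 'I_n) :
  csum M P q.+1 = csum M P q + \sum_(p < n | (p < P)%N) M p q.
Proof.
rewrite /csum -big_split /=; apply: eq_bigr => p _.
by rewrite sum_ltS addrC.
Qed.

Lemma csum_entry (R : realFieldType) (n : nat) (M : 'M[R]_n) (p q : 'I_n) :
  M p q = csum M p.+1 q.+1 - csum M p q.+1 - csum M p.+1 q + csum M p q.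
Proof.
rewrite !csumS_row sum_ltS; lra.
Qed.

Lemma sum_ind (R : realFieldType) (n i : nat) P : (1 <= i)%N -> (i <= n)%N ->
  \sum_(p < n | (p < P)%N) ((p.+1 == i)%:R : R) = (i <= P)%:R.
Proof.
move=> h1 h2; have hi : (i.-1 < n)%N by lia.
rewrite big_mkcond (bigD1 (Ordinal hi)) //= big1 ?addr0.
  rewrite prednK //; case: (i <= P)%N; by rewrite ?eqxx.
move=> x /eqP hx; case: ifP => // _.
case: eqP => // e; exfalso; apply: hx; apply: val_inj => /=; lia.
Qed.

Lemma ind_R (R : realFieldType) (i j P : nat) : (i < j)%N ->
  ((i <= P < j)%N%:R : R) = (i <= P)%:R - (j <= P)%:R.
Proof.
move=> h; case: (leqP i P) => h1; case: (leqP j P) => h2 /=;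
  rewrite ?subrr ?subr0 //; lia.
Qed.


Definition e1 (R : realFieldType) (i j p : nat) : R := (p.+1 == i)%:R - (p.+1 == j)%:R.

Definition Fm (R : realFieldType) n i j k l : 'M[R]_n :=
  \matrix_(p, q) (e1 R i j p * e1 R k l q).

Lemma sum_e1 (R : realFieldType) (n i j P : nat) : (1 <= i)%N -> (i < j)%N -> (j <= n)%N ->
  \sum_(p < n | (p < P)%N) e1 R i j p = (i <= P < j)%N%:R.
Proof.
move=> h1 h2 h3; rewrite ind_R // sumrB !sum_ind //; lia.
Qed.

Lemma csum_Fm (R : realFieldType) n i j k l P Q :
  (1 <= i)%N -> (i < j)%N -> (j <= n)%N ->
  (1 <= k)%N -> (k < l)%N -> (l <= n)%N ->
  csum (Fm R n i j k l) P Q = (in_rect i j k l P Q)%:R.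
Proof.
move=> *; rewrite /csum /in_rect.
under eq_bigr => p _ do under eq_bigr => q _ do rewrite mxE.
under eq_bigr => p _ do rewrite -mulr_sumr sum_e1 //.
rewrite -mulr_suml sum_e1 //.
by case: (i <= P < j)%N; case: (k <= Q < l)%N; rewrite /= ?mul1r ?mul0r.
Qed.

Lemma csumD (R : realFieldType) n (M N : 'M[R]_n) P Q :
  csum (M + N) P Q = csum M P Q + csum N P Q.
Proof.
rewrite /csum -big_split; apply: eq_bigr => p _; rewrite -big_split.
by apply: eq_bigr => q _; rewrite mxE.
Qed.

Definition Ssum (R : realFieldType) n i j k l : R :=
  \sum_(x < n) \sum_(y < n) (in_rect i j k l x.+1 y.+1)%:R.

Lemma Ssum_gt0 (R : realFieldType) n i j k l :
  (1 <= i)%N -> (i < j)%N -> (j <= n)%N ->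
  (1 <= k)%N -> (k < l)%N -> (l <= n)%N -> 0 < Ssum R n i j k l.
Proof.
move=> h1 h2 h3 h4 h5 h6.
have hi : (i.-1 < n)%N by lia.
have hk : (k.-1 < n)%N by lia.
rewrite /Ssum (bigD1 (Ordinal hi)) //= (bigD1 (Ordinal hk)) //=.
have -> : in_rect i j k l i.-1.+1 k.-1.+1 by rewrite /in_rect; lia.
rewrite -addrA ltr_pwDl //.
apply: addr_ge0; apply: sumr_ge0 => *; first by rewrite ler0n.
by apply: sumr_ge0 => *; rewrite ler0n.
Qed.

Lemma beta_shift (R : realFieldType) n (X Y : 'M[R]_n) i j k l :
  (forall P Q, (P <= n)%N -> (Q <= n)%N ->
     csum X P Q = csum Y P Q + (in_rect i j k l P Q)%:R) ->
  beta Y = beta X + Ssum R n i j k l.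
Proof.
move=> H; rewrite /beta /Ssum.
have -> : \sum_(i0 < n) \sum_(j0 < n) csum X i0.+1 j0.+1 =
  \sum_(i0 < n) \sum_(j0 < n) csum Y i0.+1 j0.+1 +
  \sum_(x < n) \sum_(y < n) (in_rect i j k l x.+1 y.+1)%:R.
  rewrite -big_split; apply: eq_bigr => x _; rewrite -big_split.
  by apply: eq_bigr => y _; rewrite H.
lra.
Qed.

Lemma not_both (R : realFieldType) n (A : 'M[R]_n) i j k l :
  (i < j)%N -> (k < l)%N -> essential A i j k l -> dual_essential A i j k l -> False.
Proof.
move=> h1 h2 E D.
have hr : in_rect i j k l i k by rewrite /in_rect; lia.
case: (E _ _ hr) => e _ _ _; case: (D _ _ hr) => d _ _ _.
move: e; rewrite d => /eqP; rewrite -subr_eq0 addrC addKr oner_eq0 //.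
Qed.

Lemma entry_range (R : realFieldType) n (M : 'M[R]_n) (p q : 'I_n) :
  (forall q : 'I_n, \sum_(q' < n | (q' <= q)%N) M p q' \in [:: 0; 1]) ->
  M p q \in [:: -1; 0; 1].
Proof.
move=> H.
have sub : forall a b : R, a \in [:: 0; 1] -> b \in [:: 0; 1] -> a - b \in [:: -1; 0; 1].
  move=> a b; rewrite !inE => /orP[]/eqP-> /orP[]/eqP->;
  by rewrite ?subrr ?subr0 ?sub0r ?eqxx ?orbT.
have e : M p q = \sum_(q' < n | (q' <= q)%N) M p q' - \sum_(q' < n | (q' < q)%N) M p q'.
  rewrite (eq_bigl (fun q' : 'I_n => (q' < q.+1)%N)) ?sum_ltS; last by move=> x; rewrite ltnS.
  by rewrite addrK.
rewrite e; apply: sub; first exact: H.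
case: q {e} => [[|q0] hq] /=.
  by rewrite big_pred0 // inE eqxx.
have hq0 : (q0 < n)%N by lia.
rewrite (eq_bigl (fun q' : 'I_n => (q' <= Ordinal hq0)%N)) //.
Qed.


Lemma tuple_iff (R : realFieldType) (n i j k l : nat) (A B : 'M[R]_n) :
  (i < j)%N -> (k < l)%N ->
  (forall p q : 'I_n,
      [/\ (p.+1 = i /\ q.+1 = k -> A p q - B p q = 1),
          (p.+1 = i /\ q.+1 = l -> A p q - B p q = -1),
          (p.+1 = j /\ q.+1 = k -> A p q - B p q = -1),
          (p.+1 = j /\ q.+1 = l -> A p q - B p q = 1)
        & (~ (p.+1 = i /\ q.+1 = k) -> ~ (p.+1 = i /\ q.+1 = l) ->
           ~ (p.+1 = j /\ q.+1 = k) -> ~ (p.+1 = j /\ q.+1 = l) ->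
           A p q = B p q)]) <->
  (forall p q : 'I_n, A p q = B p q + Fm R n i j k l p q).
Proof.
move=> hij hkl; split=> H p q; [have := H p q|have := H p q]; rewrite mxE /e1;
  case: (eqVneq p.+1 i) => hi; case: (eqVneq p.+1 j) => hj;
  case: (eqVneq q.+1 k) => hk; case: (eqVneq q.+1 l) => hl; rewrite /=;
  try (exfalso; lia).
all: rewrite ?subr0 ?sub0r ?mul1r ?mulr1 ?mulr0 ?mul0r ?mulrNN ?mulN1r ?mulrN1 ?addr0.
1-9: case=> H1 H2 H3 H4 H5.
1-9: first [ (have: A p q - B p q = 1 by apply: H1; split; assumption); lra
           | (have: A p q - B p q = -1 by apply: H2; split; assumption); lra
           | (have: A p q - B p q = -1 by apply: H3; split; assumption); lra
           | (have: A p q - B p q = 1 by apply: H4; split; assumption); lra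
           | have := H5 ltac:(lia) ltac:(lia) ltac:(lia) ltac:(lia); lra ].
all: move=> e; split; [move=> -[? ?]..| move=> *]; try (exfalso; lia); lra.
Qed.


Theorem mainTheorem6 (R : realFieldType) (n i j k l : nat) (A B : 'M[R]_n) :
  is_ASM B ->
  (1 <= i)%N -> (i < j)%N -> (j <= n)%N ->
  (1 <= k)%N -> (k < l)%N -> (l <= n)%N ->
  essential B i j k l ->
  ((is_ASM A /\ asm_edge A B i j k l) <->
   (forall p q : 'I_n,
      [/\ (p.+1 = i /\ q.+1 = k -> A p q - B p q = 1),
          (p.+1 = i /\ q.+1 = l -> A p q - B p q = -1),
          (p.+1 = j /\ q.+1 = k -> A p q - B p q = -1),
          (p.+1 = j /\ q.+1 = l -> A p q - B p q = 1)
        & (~ (p.+1 = i /\ q.+1 = k) -> ~ (p.+1 = i /\ q.+1 = l) ->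
           ~ (p.+1 = j /\ q.+1 = k) -> ~ (p.+1 = j /\ q.+1 = l) ->
           A p q = B p q)])).
Proof.
move=> hB h1 h2 h3 h4 h5 h6 hE.
have csF := @csum_Fm R n i j k l.
have Spos := @Ssum_gt0 R n i j k l h1 h2 h3 h4 h5 h6.
rewrite tuple_iff //; split.
  case=> hA [[E1 D1 N1] hlt].
  have hcs : forall P Q, (P <= n)%N -> (Q <= n)%N ->
      csum A P Q = csum B P Q + (in_rect i j k l P Q)%:R.
    case: (classic (essential A i j k l)) => [eA|neA].
      have := @beta_shift R n B A i j k l (E1 eA); lra.
    case: (classic (dual_essential A i j k l)) => [dA|ndA].
      by move=> P Q hP hQ; rewrite (D1 dA) // subrK.
    have e : beta A = beta B.
      rewrite /beta; congr (_ - _); apply: eq_bigr => x _; apply: eq_bigr => y _.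
      by rewrite (N1 (conj neA ndA)) //; lia.
    lra.
  move=> p q.
  rewrite (csum_entry _ _ A p q) (csum_entry _ _ B p q) (csum_entry _ _ (Fm R n i j k l) p q)
    !hcs ?csF //; try (have := ltn_ord p; have := ltn_ord q; lia).
  lra.
move=> HA.
have AE : A = B + Fm R n i j k l by apply/matrixP => p q; rewrite mxE HA.
have hcs : forall P Q, csum A P Q = csum B P Q + (in_rect i j k l P Q)%:R.
  by move=> P Q; rewrite AE csumD csF.
have dA : dual_essential A i j k l.
  move=> P Q hr; rewrite !hcs; have [e1 e2 e3 e4] := hE P Q hr.
  rewrite /in_rect in hr.
  have -> : in_rect i j k l P k by rewrite /in_rect; lia.
  have -> : in_rect i j k l P k.-1 = false by rewrite /in_rect; lia.
  have -> : in_rect i j k l P l = false by rewrite /in_rect; lia.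
  have -> : in_rect i j k l P l.-1 by rewrite /in_rect; lia.
  have -> : in_rect i j k l i Q by rewrite /in_rect; lia.
  have -> : in_rect i j k l i.-1 Q = false by rewrite /in_rect; lia.
  have -> : in_rect i j k l j Q = false by rewrite /in_rect; lia.
  have -> : in_rect i j k l j.-1 Q by rewrite /in_rect; lia.
  split; rewrite /= ?e1 ?e2 ?e3 ?e4; lra.
split; last first.
  split.
    split.
    - by move=> eA; exfalso; exact: (@not_both R n A i j k l h2 h5 eA dA).
    - by move=> _ P Q _ _; rewrite hcs addrK.
    - by case.
  have := @beta_shift R n A B i j k l (fun P Q _ _ => hcs P Q); lra.
have [B1 B2 B3 B4 B5] := hB.
have sumk : \sum_(q < n) e1 R k l q = 0.
  rewrite (eq_bigl (fun q : 'I_n => (q < n)%N)) ?sum_e1 //; last by move=> x; rewrite ltn_ord.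
  by have -> : (k <= n < l)%N = false by lia.
have sumi : \sum_(p < n) e1 R i j p = 0.
  rewrite (eq_bigl (fun q : 'I_n => (q < n)%N)) ?sum_e1 //; last by move=> x; rewrite ltn_ord.
  by have -> : (i <= n < j)%N = false by lia.
have rowB : forall p q : 'I_n, \sum_(q' < n | (q' <= q)%N) B p q' =
   csum B p.+1 q.+1 - csum B p q.+1.
  move=> p q; rewrite csumS_row addrAC subrr add0r.
  by apply: eq_bigl => x; rewrite ltnS.
have colB : forall p q : 'I_n, \sum_(p' < n | (p' <= p)%N) B p' q =
   csum B p.+1 q.+1 - csum B p.+1 q.
  move=> p q; rewrite csumS_col addrAC subrr add0r.
  by apply: eq_bigl => x; rewrite ltnS.
have rowA : forall p q : 'I_n, \sum_(q' < n | (q' <= q)%N) A p q' =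
   (csum B p.+1 q.+1 - csum B p q.+1) + e1 R i j p * (k <= q.+1 < l)%N%:R.
  move=> p q; rewrite AE -rowB; under eq_bigr => x _ do rewrite !mxE.
  rewrite big_split /= -mulr_sumr; congr (_ + _ * _).
  by rewrite (eq_bigl (fun x : 'I_n => (x < q.+1)%N)) ?sum_e1.
have colA : forall p q : 'I_n, \sum_(p' < n | (p' <= p)%N) A p' q =
   (csum B p.+1 q.+1 - csum B p.+1 q) + e1 R k l q * (i <= p.+1 < j)%N%:R.
  move=> p q; rewrite AE -colB; under eq_bigr => x _ do rewrite !mxE.
  rewrite big_split /= -mulr_suml mulrC; congr (_ + _ * _).
  by rewrite (eq_bigl (fun x : 'I_n => (x < p.+1)%N)) ?sum_e1.
have rowOK : forall p q : 'I_n, \sum_(q' < n | (q' <= q)%N) A p q' \in [:: 0; 1].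
  move=> p q; have hb := B2 p q; rewrite rowB in hb; rewrite rowA /e1.
  have hp := ltn_ord p.
  case hq: (k <= q.+1 < l)%N; last by rewrite mulr0 addr0.
  case: (eqVneq p.+1 i) => hi.
    subst i; have [_ _ e3 _] := hE p.+1 q.+1 ltac:(rewrite /in_rect; lia).
    have -> : (p.+1 == j) = false by lia.
    rewrite ?eqxx /= in e3 *; rewrite !inE; apply/orP; right; apply/eqP; lra.
  case: (eqVneq p.+1 j) => hj.
    subst j; have [_ _ _ e4] := hE i q.+1 ltac:(rewrite /in_rect; lia).
    rewrite ?eqxx /= in e4 *; rewrite ?(negbTE hi) !inE; apply/orP; left; apply/eqP; lra.
  by rewrite ?(negbTE hi) ?(negbTE hj) subrr mul0r addr0.
have colOK : forall p q : 'I_n, \sum_(p' < n | (p' <= p)%N) A p' q \in [:: 0; 1].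
  move=> p q; have hb := B3 p q; rewrite colB in hb; rewrite colA /e1.
  have hq := ltn_ord q.
  case hp: (i <= p.+1 < j)%N; last by rewrite mulr0 addr0.
  case: (eqVneq q.+1 k) => hk.
    subst k; have [e1' _ _ _] := hE p.+1 q.+1 ltac:(rewrite /in_rect; lia).
    have -> : (q.+1 == l) = false by lia.
    rewrite ?eqxx /= in e1' *; rewrite !inE; apply/orP; right; apply/eqP; lra.
  case: (eqVneq q.+1 l) => hl.
    subst l; have [_ e2' _ _] := hE p.+1 k ltac:(rewrite /in_rect; lia).
    rewrite ?eqxx /= in e2' *; rewrite ?(negbTE hk) !inE; apply/orP; left; apply/eqP; lra.
  by rewrite ?(negbTE hk) ?(negbTE hl) subrr mul0r addr0.
split => //.
- by move=> p q; apply: entry_range.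
- move=> p; rewrite AE; under eq_bigr => x _ do rewrite !mxE.
  by rewrite big_split /= -mulr_sumr sumk mulr0 addr0 B4.
- move=> q; rewrite AE; under eq_bigr => x _ do rewrite !mxE.
  by rewrite big_split /= -mulr_suml sumi mul0r addr0 B5.
Qed.
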